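(* Let $C_n$ be the cycle on $n\geq 3$ vertices. Then $\gamma_{gr}^{2}(C_n)=n-1$, $\gamma_{gr}^{L,2}(C_n)=n$, $\gamma_{gr}^{Z,2}(C_n)=n-1$, and $\gamma_{gr}^{t,2}(C_n)=n$.
   Context: For a vertex $v$, $N(v)$ is its open neighborhood and $N[v]=N(v)\cup\{v\}$. Let $k$ be a positive integer. A sequence $S=(v_1,\ldots,v_m)$ of distinct vertices is a $k$-sequence (resp. $k$-$L$-sequence, $k$-$Z$-sequence, $k$-$t$-sequence) if for each $i\in[m]$ there is a vertex $u_i$ with $u_i\in N[v_i]$ (resp. $N[v_i]$, $N(v_i)$, $N(v_i)$) such that the number of indices $j<i$ with $u_i\in N[v_j]$ (resp. $N(v_j)$, $N[v_j]$, $N(v_j)$) is less than $k$. The numbers $\gamma_{gr}^{k}(G)$, $\gamma_{gr}^{L,k}(G)$, $\gamma_{gr}^{Z,k}(G)$, $\gamma_{gr}^{t,k}(G)$ are the maximum lengths of such sequences, respectively. *)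

(* Defs.v *)
From mathcomp Require Import all_boot all_order.
Set Implicit Arguments. Unset Strict Implicit. Unset Printing Implicit Defensive.

Definition simple_graph (T : finType) (e : rel T) : Prop :=
  symmetric e /\ irreflexive e.

Definition inN (T : finType) (e : rel T) (v u : T) : bool := e v u.
Definition inNc (T : finType) (e : rel T) (v u : T) : bool := (u == v) || e v u.

(* Generic sequence condition parameterized by the two neighbourhood kinds:
   [na] is used for "u_i in N_a[v_i]", [nb] for "u_i in N_b(v_j)". *)
Definition gseq (T : finType) (na nb : T -> T -> bool) (k : nat) (s : seq T) : bool :=
  uniq s &&
  [forall i : 'I_(size s),
     [exists u : T,
        na (nth u s i) u &&
        (#|[set j : 'I_(size s) | (j < i) && nb (nth u s j) u]| < k)]].

Definition kseq  T e k s := @gseq T (inNc e) (inNc e) k s.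
Definition kLseq T e k s := @gseq T (inNc e) (inN e) k s.
Definition kZseq T e k s := @gseq T (inN e) (inNc e) k s.
Definition ktseq T e k s := @gseq T (inN e) (inN e) k s.

(* maximum length of a sequence satisfying P (sequences of distinct vertices
   have length at most #|T|); 0 if none. *)
Definition max_len (T : finType) (P : seq T -> bool) : nat :=
  \max_(m < #|T|.+1 | [exists t : m.-tuple T, P t]) m.

Definition gamma_gr  T e k := max_len (@kseq T e k).
Definition gamma_grL T e k := max_len (@kLseq T e k).
Definition gamma_grZ T e k := max_len (@kZseq T e k).
Definition gamma_grt T e k := max_len (@ktseq T e k).

(* The cycle C_n on vertex set 'I_n: i ~ j iff j = i+1 mod n or i = j+1 mod n
   (and i <> j). For n >= 3 this is the usual cycle. *)
Definition cycle_rel (n : nat) : rel 'I_n :=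
  fun i j => (i != j) && ((j == (i.+1 %% n) :> nat) || (i == (j.+1 %% n) :> nat)).
Arguments cycle_rel n%_nat_scope _ _ : clear implicits.

(* Main.v *)
Require Import Defs.
From mathcomp Require Import all_boot all_order.
From mathcomp Require Import zify.

Lemma adjE n (x u : 'I_n) : cycle_rel n x u =
  (nat_of_ord x != nat_of_ord u) && ((nat_of_ord u == (nat_of_ord x).+1) || ((nat_of_ord x).+1 == n) && (nat_of_ord u == 0)
     || (nat_of_ord x == (nat_of_ord u).+1) || ((nat_of_ord u).+1 == n) && (nat_of_ord x == 0)).
Proof.
rewrite /cycle_rel.
have mS (y : 'I_n) : (nat_of_ord y).+1 %% n = if (nat_of_ord y).+1 == n then 0 else (nat_of_ord y).+1.
  case: eqP => [->|h]; first by rewrite modnn.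
  rewrite modn_small //; have := ltn_ord y; lia.
have -> : (x != u) = (nat_of_ord x != nat_of_ord u) by [].
rewrite !mS; have := ltn_ord x; have := ltn_ord u.
case: ifP => /eqP h1; case: ifP => /eqP h2 => *; apply/idP/idP => ?; lia.
Qed.

Lemma inNcE n (w u : 'I_n) : inNc (cycle_rel n) w u = (nat_of_ord u == nat_of_ord w) || cycle_rel n w u.
Proof. by []. Qed.

Lemma inNE n (w u : 'I_n) : inN (cycle_rel n) w u = cycle_rel n w u.
Proof. by []. Qed.

Lemma max_lenE (T : finType) (P : seq T -> bool) L : L <= #|T| ->
  (exists s, P s /\ size s = L) -> (forall s, P s -> size s <= L) -> max_len P = L.
Proof.
move=> hL [s [Ps sz]] ub; apply/eqP; rewrite eqn_leq; apply/andP; split.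
- apply/bigmax_leqP => i /= /existsP [t Pt]. by rewrite -(size_tuple t); apply: ub.
- have hi : L < #|T|.+1 by [].
  apply: (@leq_bigmax_cond _ _ _ (Ordinal hi)) => /=. apply/existsP. subst L.
  by exists (in_tuple s).
Qed.

Lemma gseq_size {T : finType} {na nb k} {s : seq T} : gseq na nb k s -> size s <= #|T|.
Proof. by case/andP => u _; rewrite -(card_uniqP u) max_card. Qed.

Lemma gseq_mono {T : finType} {na na' nb : T -> T -> bool} {k s} :
  (forall v u, na v u -> na' v u) -> gseq na nb k s -> gseq na' nb k s.
Proof.
move=> h /andP [u /forallP H]; apply/andP; split=> //; apply/forallP=> i.
have /existsP [w /andP [h1 h2]] := H i; apply/existsP; exists w; rewrite h2 andbT; exact: h.
Qed.

Lemma succ_ex {n} (u : 'I_n) : exists b : 'I_n,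
  ((nat_of_ord u).+1 < n /\ nat_of_ord b = (nat_of_ord u).+1) \/ ((nat_of_ord u).+1 = n /\ nat_of_ord b = 0).
Proof.
have hu := ltn_ord u.
case: (ltnP (nat_of_ord u).+1 n) => h.
- by exists (Ordinal h); left.
- have h0 : 0 < n by lia.
  exists (Ordinal h0); right; split=> //; lia.
Qed.

Lemma pred_ex {n} (u : 'I_n) : exists b : 'I_n,
  (0 < nat_of_ord u /\ nat_of_ord b = (nat_of_ord u).-1) \/ (nat_of_ord u = 0 /\ nat_of_ord b = n.-1).
Proof.
have hu := ltn_ord u.
case: (posnP (nat_of_ord u)) => h.
- have h0 : n.-1 < n by lia.
  by exists (Ordinal h0); right.
- have h0 : (nat_of_ord u).-1 < n by lia.
  by exists (Ordinal h0); left.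
Qed.

Lemma nbr {n} (hn : 3 <= n) (v u : 'I_n) : exists w1 w2 : 'I_n,
  [/\ w1 != w2, w1 != v, w2 != v, inNc (cycle_rel n) w1 u & inNc (cycle_rel n) w2 u].
Proof.
have [b hb] := succ_ex u; have [c hc] := pred_ex u.
have hu := ltn_ord u; have hbn := ltn_ord b; have hcn := ltn_ord c.
have Ha : inNc (cycle_rel n) u u by rewrite inNcE eqxx.
have Hb : inNc (cycle_rel n) b u by rewrite inNcE adjE; lia.
have Hc : inNc (cycle_rel n) c u by rewrite inNcE adjE; lia.
have ab : u != b by rewrite -val_eqE /=; lia.
have ac : u != c by rewrite -val_eqE /=; lia.
have bc : b != c by rewrite -val_eqE /=; lia.
case: (v =P u) => [->|hvu]; first by exists b, c; split; rewrite // eq_sym.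
case: (v =P b) => [->|hvb]; first by exists u, c; split; rewrite // eq_sym.
exists u, b; split=> //; apply/eqP=> e; [exact: hvu | exact: hvb].
Qed.

Lemma no_full {n} (hn : 3 <= n) (s : seq 'I_n) :
  gseq (inNc (cycle_rel n)) (inNc (cycle_rel n)) 2 s -> size s < n.
Proof.
move=> g; have := gseq_size g; rewrite card_ord leq_eqVlt => /orP [/eqP sz|//].
exfalso; case/andP: g => us /forallP H.
have allin : forall x, x \in s.
  move=> x; have hs : size (enum 'I_n) <= size s by rewrite size_enum_ord sz.
  have hsub : {subset s <= enum 'I_n} by move=> y _; rewrite mem_enum.
  have [_ eqs] := uniq_min_size us hsub hs.
  by rewrite eqs mem_enum.
have hi : n.-1 < size s by rewrite sz; lia.
have /existsP [u /andP [hv hc]] := H (Ordinal hi).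
set v := nth u s n.-1 in hv.
have [w1 [w2 [d12 d1 d2 i1 i2]]] := nbr hn v u.
have hj (w : 'I_n) : w != v -> index w s < n.-1.
  move=> wv; have := index_mem w s; rewrite allin => hw.
  rewrite ltn_neqAle; apply/andP; split; last by rewrite sz in hw; lia.
  apply/eqP=> e; move/eqP: wv; apply; by rewrite /v -e nth_index.
have j1 : index w1 s < size s by rewrite index_mem.
have j2 : index w2 s < size s by rewrite index_mem.
have : #|[set Ordinal j1; Ordinal j2]| <= 1.
  rewrite -ltnS; apply: leq_ltn_trans _ hc; apply: subset_leq_card; apply/subsetP=> j.
  rewrite !inE => /orP [] /eqP -> /=; rewrite nth_index //.
  - by rewrite hj.
  - by rewrite hj.
rewrite cards2; case: eqP => // e _; move/eqP: d12; apply.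
have : nth u s (Ordinal j1) = nth u s (Ordinal j2) by rewrite e.
by rewrite /= !nth_index.
Qed.

Lemma wit {n} L (na nb : 'I_n -> 'I_n -> bool) : L <= n ->
  (forall i : 'I_n, i < L -> exists u, na i u /\
     forall j1 j2 : 'I_n, j1 < i -> j2 < i -> nb j1 u -> nb j2 u -> j1 = j2) ->
  gseq na nb 2 (take L (enum 'I_n)) /\ size (take L (enum 'I_n)) = L.
Proof.
move=> hL H.
have sz : size (take L (enum 'I_n)) = L by rewrite size_takel // size_enum_ord.
have nv (d : 'I_n) (j : nat) : j < L -> nat_of_ord (nth d (take L (enum 'I_n)) j) = j.
  by move=> hj; rewrite nth_take // nth_enum_ord //; lia.
split=> //; apply/andP; split; first by rewrite take_uniq // enum_uniq.
apply/forallP=> i.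
have hiL : nat_of_ord i < L := leq_trans (ltn_ord i) (eq_leq sz).
have hin : nat_of_ord i < n by lia.
have [u [hu hj]] := H (Ordinal hin) hiL.
apply/existsP; exists u.
have -> : nth u (take L (enum 'I_n)) i = Ordinal hin by apply: val_inj; rewrite /= nv.
rewrite hu /=; apply/card_le1_eqP => j1 j2; rewrite !inE => /andP [l1 n1] /andP [l2 n2].
have hj1 : nat_of_ord j1 < L := leq_trans (ltn_ord j1) (eq_leq sz).
have hj2 : nat_of_ord j2 < L := leq_trans (ltn_ord j2) (eq_leq sz).
have := hj _ _ _ _ n1 n2; rewrite /= !nv // => /(_ l1 l2) e.
by apply: val_inj; rewrite /= -(nv u j1 hj1) -(nv u j2 hj2) e.
Qed.

Theorem mainTheorem5 (n : nat) (hn : 3 <= n) :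
  [/\ gamma_gr (cycle_rel n) 2 = n.-1,
      gamma_grL (cycle_rel n) 2 = n,
      gamma_grZ (cycle_rel n) 2 = n.-1
    & gamma_grt (cycle_rel n) 2 = n].
Proof.
have W (L : nat) (na nb : 'I_n -> 'I_n -> bool) : L <= n ->
  (forall (i u j1 j2 : 'I_n), i < L ->
     (((nat_of_ord i).+1 < n /\ nat_of_ord u = (nat_of_ord i).+1) \/ ((nat_of_ord i).+1 = n /\ nat_of_ord u = 0)) ->
     na i u /\ (j1 < i -> j2 < i -> nb j1 u -> nb j2 u -> j1 = j2)) ->
  exists s, gseq na nb 2 s /\ size s = L.
  move=> hL H; exists (take L (enum 'I_n)); apply: wit => // i hi.
  have [u hu] := succ_ex i; exists u; split; first by case: (H i u i i hi hu).
  by move=> j1 j2; case: (H i u j1 j2 hi hu).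
split.
- apply: max_lenE; first by rewrite card_ord; lia.
  + apply: W; first by lia.
    move=> i u j1 j2 hi hu; have := ltn_ord j1; have := ltn_ord j2; have := ltn_ord u.
    rewrite !inNcE !adjE => *; split; first by lia.
    move=> *; apply: val_inj => /=; lia.
  + by move=> s g; rewrite -ltnS (ltn_predK hn); exact: no_full hn s g.
- apply: max_lenE; first by rewrite card_ord.
  + apply: W; first by lia.
    move=> i u j1 j2 hi hu; have := ltn_ord j1; have := ltn_ord j2; have := ltn_ord u.
    rewrite !inNcE !inNE !adjE => *; split; first by lia.
    move=> *; apply: val_inj => /=; lia.
  + by move=> s g; have := gseq_size g; rewrite card_ord.
- apply: max_lenE; first by rewrite card_ord; lia.
  + apply: W; first by lia.
    move=> i u j1 j2 hi hu; have := ltn_ord j1; have := ltn_ord j2; have := ltn_ord u.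
    rewrite !inNcE !inNE !adjE => *; split; first by lia.
    move=> *; apply: val_inj => /=; lia.
  + move=> s g; have g' : gseq (inNc (cycle_rel n)) (inNc (cycle_rel n)) 2 s.
      by apply: gseq_mono g => v u; rewrite /inN /inNc => ->; rewrite orbT.
    by rewrite -ltnS (ltn_predK hn); exact: no_full hn s g'.
- apply: max_lenE; first by rewrite card_ord.
  + apply: W; first by lia.
    move=> i u j1 j2 hi hu; have := ltn_ord j1; have := ltn_ord j2; have := ltn_ord u.
    rewrite !inNE !adjE => *; split; first by lia.
    move=> *; apply: val_inj => /=; lia.
  + by move=> s g; have := gseq_size g; rewrite card_ord.
Qed.
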